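(* Let $n\ge1$, $m\ge0$, $a,b>0$, $I_{m,n,s}(x)=\int_s^x(1+t)^nt^m\,dt$, $\mu_s=\frac{(1+a)^na^mb+nI_{m,n-1,s}(a)}{I_{m,n,s}(a)}$ and $\tilde\psi_s(x)=\frac{\mu_sI_{m,n,s}(x)-nI_{m,n-1,s}(x)}{(1+x)^nx^m}$ for $s\in[0,a)$. Assume $\mu_0\le n$ and let $\lambda\in[0,a)$ be the unique solution of $\mu_\lambda(1+\lambda)=n$. Then for all $s\in(0,a)$ with $s\neq\lambda$ and all $x\in(0,a)$, $\tilde\psi_s(x)<\tilde\psi_\lambda(x)$. *)

(* Defs.v *)
From Stdlib Require Import Reals.
From Coquelicot Require Import Coquelicot.
Open Scope R_scope.

Definition Iint (m n : nat) (s x : R) : R :=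
  RInt (fun t => (1 + t) ^ n * t ^ m) s x.

Definition mu (m n : nat) (a b s : R) : R :=
  ((1 + a) ^ n * a ^ m * b + INR n * Iint m (n - 1) s a) / Iint m n s a.

Definition psi_tilde (m n : nat) (a b s x : R) : R :=
  (mu m n a b s * Iint m n s x - INR n * Iint m (n - 1) s x)
  / ((1 + x) ^ n * x ^ m).

(* Main.v *)
Require Import Defs.
From Stdlib Require Import Reals Lra.
From Coquelicot Require Import Coquelicot.
From Stdlib Require Import ssreflect Lia.
Open Scope R_scope.

Lemma poly_cont (c : R) (k l : nat) x : continuous (fun t => c * ((1 + t) ^ k * t ^ l)) x.
Proof. apply: ex_derive_continuous. auto_derive. easy. Qed.

Lemma poly_cont1 (k l : nat) x : continuous (fun t => (1 + t) ^ k * t ^ l) x.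
Proof. apply: ex_derive_continuous. auto_derive. easy. Qed.

Lemma poly_ex (k l : nat) u v : ex_RInt (fun t => (1 + t) ^ k * t ^ l) u v.
Proof. apply: ex_RInt_continuous => z _; apply poly_cont1. Qed.

Lemma chas (k l : nat) u v w :
  RInt (fun t => (1 + t) ^ k * t ^ l) u v + RInt (fun t => (1 + t) ^ k * t ^ l) v w
  = RInt (fun t => (1 + t) ^ k * t ^ l) u w.
Proof. exact: (RInt_Chasles _ _ _ _ (poly_ex k l u v) (poly_ex k l v w)). Qed.

Lemma rscal (c : R) (k l : nat) u v :
  RInt (fun t => c * ((1 + t) ^ k * t ^ l)) u v = c * RInt (fun t => (1 + t) ^ k * t ^ l) u v.
Proof. exact: (RInt_scal _ _ _ c (poly_ex k l u v)). Qed.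

Lemma pos_w (k l : nat) t : 0 < t -> 0 < (1 + t) ^ k * t ^ l.
Proof. move=> h; apply Rmult_lt_0_compat; apply pow_lt; lra. Qed.

Lemma Ipos (k l : nat) u v : 0 <= u < v -> 0 < RInt (fun t => (1 + t) ^ k * t ^ l) u v.
Proof.
  move=> h; apply RInt_gt_0; first lra.
  - move=> t ht; apply pos_w; lra.
  - move=> t _; apply poly_cont1.
Qed.

Lemma wsplit (n m : nat) t : (1 <= n)%nat ->
  (1 + t) ^ n * t ^ m = (1 + t) * ((1 + t) ^ (n - 1) * t ^ m).
Proof.
  move=> hn. replace n with (S (n - 1)) at 1 by lia. simpl. ring.
Qed.

Theorem corollary3p5 (n m : nat) (a b lambda : R) :
  (1 <= n)%nat -> 0 < a -> 0 < b ->
  mu m n a b 0 <= INR n ->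
  0 <= lambda < a ->
  mu m n a b lambda * (1 + lambda) = INR n ->
  forall s x : R, 0 < s < a -> s <> lambda -> 0 < x < a ->
    psi_tilde m n a b s x < psi_tilde m n a b lambda x.
Proof.
  move=> hn ha hb _ hl hmu s x hs hsl hx.
  set w := fun t => (1 + t) ^ n * t ^ m.
  set w1 := fun t => (1 + t) ^ (n - 1) * t ^ m.
  set C := (1 + a) ^ n * a ^ m * b.
  have nR : 0 < INR n by apply lt_0_INR; lia.
  have Cp : 0 < C.
    rewrite /C; apply Rmult_lt_0_compat => //; apply pos_w; lra.
  set M := mu m n a b lambda.
  have Mp : 0 < M.
    have : M = INR n / (1 + lambda) by rewrite -hmu /M; field; lra.
    move=> ->; apply Rdiv_lt_0_compat; lra.
  have Al : 0 < RInt w lambda a := Ipos n m lambda a ltac:(lra).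
  have As : 0 < RInt w s a := Ipos n m s a ltac:(lra).
  have Ax : 0 < RInt w x a := Ipos n m x a ltac:(lra).
  have wx : 0 < w x := pos_w n m x ltac:(lra).
  have hM : M * RInt w lambda a = C + INR n * RInt w1 lambda a.
    rewrite /M /mu /Iint -/w -/w1 -/C; field; lra.
  have key : M < mu m n a b s.
    rewrite /mu /Iint -/w -/w1 -/C.
    apply Rmult_lt_reg_r with (RInt w s a) => //.
    rewrite /Rdiv Rmult_assoc Rinv_l; last lra.
    rewrite Rmult_1_r.
    have [hlt|hgt] : s < lambda \/ lambda < s by lra.
    -
      rewrite -(chas n m s lambda a) -(chas (n-1) m s lambda a) -/w -/w1.
      have : M * RInt w s lambda < INR n * RInt w1 s lambda.
        rewrite -!rscal. apply RInt_lt => //.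
        + move=> t _; apply poly_cont.
        + move=> t _; apply poly_cont.
        + move=> t ht. rewrite /w (wsplit n m t hn) -/(w1 t).
          have := pos_w (n-1) m t ltac:(lra). rewrite -/(w1 t) => hw.
          rewrite -hmu -/M. have := Rmult_lt_0_compat _ _ Mp hw. nra.
      nra.
    - rewrite -(chas n m lambda s a) -(chas (n-1) m lambda s a) -/w -/w1 in hM.
      have : INR n * RInt w1 lambda s < M * RInt w lambda s.
        rewrite -!rscal. apply RInt_lt => //.
        + move=> t _; apply poly_cont.
        + move=> t _; apply poly_cont.
        + move=> t ht. rewrite /w (wsplit n m t hn) -/(w1 t).
          have := pos_w (n-1) m t ltac:(lra). rewrite -/(w1 t) => hw.
          rewrite -hmu -/M. have := Rmult_lt_0_compat _ _ Mp hw. nra.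
      nra.
  have ps : forall r, 0 <= r < a ->
      psi_tilde m n a b r x = (C + INR n * RInt w1 x a - mu m n a b r * RInt w x a) / w x.
    move=> r hr.
    have Ar : 0 < RInt w r a := Ipos n m r a hr.
    rewrite /psi_tilde /Iint -/w -/w1.
    have hr' : mu m n a b r * RInt w r a = C + INR n * RInt w1 r a.
      rewrite /mu /Iint -/w -/w1 -/C; field; lra.
    have e1 : RInt w r x = RInt w r a - RInt w x a.
      have h := chas n m r x a. rewrite -/w in h. lra.
    have e2 : RInt w1 r x = RInt w1 r a - RInt w1 x a.
      have h := chas (n-1) m r x a. rewrite -/w1 in h. lra.
    rewrite e1 e2. congr (_ / _). rewrite -/(w x). nra.
  rewrite (ps s ltac:(lra)) (ps lambda hl) -/M.
  apply Rmult_lt_compat_r; first by apply Rinv_0_lt_compat.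
  nra.
Qed.
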